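(* The category $\mathbf{StEqSppQu}$ is a reflective full subcategory of $\mathbf{StBasedQu}$.
   Context: For a locale $A$, an $A$-$A$-bimodule is a sup-lattice $M$ with actions $a\triangleright m$, $m\triangleleft a$ preserving joins in each variable, with $1_A\triangleright m=m$, $(a\wedge b)\triangleright m=a\triangleright(b\triangleright m)$, $m\triangleleft1_A=m$, $m\triangleleft(a\wedge b)=(m\triangleleft a)\triangleleft b$, $(a\triangleright m)\triangleleft b=a\triangleright(m\triangleleft b)$. An $A$-$A$-quantale is such a $Q$ with associative join-preserving multiplication and $(a\triangleright x)y=a\triangleright(xy)$, $(x\triangleleft a)y=x(a\triangleright y)$, $(xy)\triangleleft a=x(y\triangleleft a)$; involutive if there is a join-preserving $x\mapsto x^*$ with $x^{**}=x$, $(xy)^*=y^*x^*$, $(a\triangleright(x\triangleleft b))^*=b\triangleright(x^*\triangleleft a)$. A based quantale is an involutive $Q_0$-$Q_0$-quantale $Q$ for some locale $Q_0$. A morphism of based quantales $f:Q\to R$ is a pair $(f_1,f_0)$ with $f_1$ a homomorphism of involutive quantales (join-, multiplication- and involution-preserving) and $f_0:Q_0\to R_0$ a frame homomorphism with $f_1(a\triangleright x)=f_0(a)\triangleright f_1(x)$, $f_1(x\triangleleft a)=f_1(x)\triangleleft f_0(a)$; it is strong if $f_1(1_Q)=1_R$. $\mathbf{StBasedQu}$: based quantales with strong morphisms. A support on $Q$ is a join-preserving $\varsigma:Q\to Q_0$ with $\varsigma(1_Q)=1_{Q_0}$, $\varsigma(x)\triangleright y\le xx^*y$, $\varsigma(x)\triangleright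 x=x$; equivariant if $\varsigma(a\triangleright x)=a\wedge\varsigma(x)$. $\mathbf{StEqSppQu}$: based quantales admitting an equivariant support, with strong morphisms of based quantales commuting with the supports ($f_0\circ\varsigma_Q=\varsigma_R\circ f_1$); it is regarded as a subcategory of $\mathbf{StBasedQu}$ (equivariant supports are unique). *)

(* Defs.v *)
Record SupLattice := {
  sl_car :> Type;
  sl_le : sl_car -> sl_car -> Prop;
  sl_sup : (sl_car -> Prop) -> sl_car;
  sl_le_refl : forall x, sl_le x x;
  sl_le_trans : forall x y z, sl_le x y -> sl_le y z -> sl_le x z;
  sl_le_antisym : forall x y, sl_le x y -> sl_le y x -> x = y;
  sl_sup_ub : forall (S : sl_car -> Prop) x, S x -> sl_le x (sl_sup S);
  sl_sup_least : forall (S : sl_car -> Prop) y,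
      (forall x, S x -> sl_le x y) -> sl_le (sl_sup S) y
}.

Arguments sl_le {s} _ _.
Arguments sl_sup {s} _.

Definition sl_top (L : SupLattice) : L := sl_sup (fun _ : L => True).

Definition img {A B : Type} (f : A -> B) (S : A -> Prop) : B -> Prop :=
  fun y => exists x, S x /\ y = f x.

Definition join_preserving {L M : SupLattice} (f : L -> M) : Prop :=
  forall S : L -> Prop, f (sl_sup S) = sl_sup (img f S).

Record Locale := {
  loc_sl :> SupLattice;
  loc_meet : loc_sl -> loc_sl -> loc_sl;
  loc_meet_lb1 : forall a b, sl_le (loc_meet a b) a;
  loc_meet_lb2 : forall a b, sl_le (loc_meet a b) b;
  loc_meet_greatest : forall a b c, sl_le c a -> sl_le c b -> sl_le c (loc_meet a b);
  loc_distr : forall a (S : loc_sl -> Prop),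
      loc_meet a (sl_sup S) = sl_sup (img (loc_meet a) S)
}.

Arguments loc_meet {l} _ _.

Definition frame_hom {A B : Locale} (f : A -> B) : Prop :=
  join_preserving (L := A) (M := B) f /\
  (forall a b, f (loc_meet a b) = loc_meet (f a) (f b)) /\
  f (sl_top A) = sl_top B.

(* A based quantale: an involutive Q0-Q0-quantale Q for a locale Q0.
   lact a x = a |> x ,  ract x a = x <| a . *)
Record BasedQuantale := {
  bq_Q0 : Locale;
  bq_Q : SupLattice;
  lact : bq_Q0 -> bq_Q -> bq_Q;
  ract : bq_Q -> bq_Q0 -> bq_Q;
  qmul : bq_Q -> bq_Q -> bq_Q;
  qinv : bq_Q -> bq_Q;
  lact_join_l : forall (S : bq_Q0 -> Prop) m,
      lact (sl_sup S) m = sl_sup (img (fun a => lact a m) S);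
  lact_join_r : forall a (S : bq_Q -> Prop),
      lact a (sl_sup S) = sl_sup (img (lact a) S);
  ract_join_l : forall (S : bq_Q -> Prop) a,
      ract (sl_sup S) a = sl_sup (img (fun m => ract m a) S);
  ract_join_r : forall m (S : bq_Q0 -> Prop),
      ract m (sl_sup S) = sl_sup (img (ract m) S);
  lact_top : forall m, lact (sl_top bq_Q0) m = m;
  lact_meet : forall a b m, lact (loc_meet a b) m = lact a (lact b m);
  ract_top : forall m, ract m (sl_top bq_Q0) = m;
  ract_meet : forall m a b, ract m (loc_meet a b) = ract (ract m a) b;
  lact_ract : forall a m b, ract (lact a m) b = lact a (ract m b);
  qmul_assoc : forall x y z, qmul (qmul x y) z = qmul x (qmul y z);
  qmul_join_l : forall (S : bq_Q -> Prop) y,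
      qmul (sl_sup S) y = sl_sup (img (fun x => qmul x y) S);
  qmul_join_r : forall x (S : bq_Q -> Prop),
      qmul x (sl_sup S) = sl_sup (img (qmul x) S);
  qmul_lact : forall a x y, qmul (lact a x) y = lact a (qmul x y);
  qmul_ract_lact : forall x a y, qmul (ract x a) y = qmul x (lact a y);
  qmul_ract : forall x y a, ract (qmul x y) a = qmul x (ract y a);
  qinv_join : forall S : bq_Q -> Prop, qinv (sl_sup S) = sl_sup (img qinv S);
  qinv_invol : forall x, qinv (qinv x) = x;
  qinv_mul : forall x y, qinv (qmul x y) = qmul (qinv y) (qinv x);
  qinv_act : forall a x b, qinv (lact a (ract x b)) = lact b (ract (qinv x) a)
}.

Arguments lact {b} _ _ : rename.
Arguments ract {b} _ _ : rename.
Arguments qmul {b} _ _ : rename.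
Arguments qinv {b} _ : rename.

Definition strong_morphism (Q R : BasedQuantale)
    (f1 : bq_Q Q -> bq_Q R) (f0 : bq_Q0 Q -> bq_Q0 R) : Prop :=
  join_preserving f1 /\
  (forall x y, f1 (qmul x y) = qmul (f1 x) (f1 y)) /\
  (forall x, f1 (qinv x) = qinv (f1 x)) /\
  frame_hom f0 /\
  (forall a x, f1 (lact a x) = lact (f0 a) (f1 x)) /\
  (forall x a, f1 (ract x a) = ract (f1 x) (f0 a)) /\
  f1 (sl_top (bq_Q Q)) = sl_top (bq_Q R).

Definition is_support (Q : BasedQuantale) (s : bq_Q Q -> bq_Q0 Q) : Prop :=
  join_preserving (L := bq_Q Q) (M := bq_Q0 Q) s /\
  s (sl_top (bq_Q Q)) = sl_top (bq_Q0 Q) /\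
  (forall x y, sl_le (lact (s x) y) (qmul (qmul x (qinv x)) y)) /\
  (forall x, lact (s x) x = x).

Definition equivariant (Q : BasedQuantale) (s : bq_Q Q -> bq_Q0 Q) : Prop :=
  forall a x, s (lact a x) = loc_meet a (s x).

Definition is_equivariant_support (Q : BasedQuantale) (s : bq_Q Q -> bq_Q0 Q) :=
  is_support Q s /\ equivariant Q s.

Definition has_eq_support (Q : BasedQuantale) : Prop :=
  exists s, is_equivariant_support Q s.

(* Main.v *)
Require Import Defs.
From Stdlib Require Import FunctionalExtensionality PropExtensionality ProofIrrelevance.

Lemma sup_ub' {L : SupLattice} (S : L -> Prop) x : S x -> sl_le x (sl_sup S).
Proof. apply sl_sup_ub. Qed.

Lemma le_trans' {L : SupLattice} (x y z : L) : sl_le x y -> sl_le y z -> sl_le x z.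
Proof. apply sl_le_trans. Qed.

Lemma sup_mono {L : SupLattice} (S T : L -> Prop) :
  (forall x, S x -> T x) -> sl_le (sl_sup S) (sl_sup T).
Proof. intros H; apply sl_sup_least; intros x Hx; apply sl_sup_ub; auto. Qed.

Lemma sup_le_sup {L : SupLattice} (S T : L -> Prop) :
  (forall x, S x -> sl_le x (sl_sup T)) -> sl_le (sl_sup S) (sl_sup T).
Proof. intros H; apply sl_sup_least; auto. Qed.

Lemma le_top {L : SupLattice} (x : L) : sl_le x (sl_top L).
Proof. unfold sl_top; apply sl_sup_ub; exact I. Qed.

Lemma jp_mono {L M : SupLattice} (f : L -> M) :
  (forall S, f (sl_sup S) = sl_sup (img f S)) ->
  forall x y, sl_le x y -> sl_le (f x) (f y).
Proof.
  intros H x y Hxy.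
  assert (E : sl_sup (fun z => z = x \/ z = y) = y).
  { apply sl_le_antisym.
    - apply sl_sup_least; intros z [->| ->]; auto using sl_le_refl.
    - apply sl_sup_ub; auto. }
  rewrite <- E, H. apply sl_sup_ub. exists x; split; auto.
Qed.

Lemma meet_top (A : Locale) (a : A) : loc_meet a (sl_top A) = a.
Proof.
  apply sl_le_antisym. apply loc_meet_lb1.
  apply loc_meet_greatest. apply sl_le_refl. apply le_top.
Qed.

Lemma meet_comm (A : Locale) (a b : A) : loc_meet a b = loc_meet b a.
Proof.
  apply sl_le_antisym; apply loc_meet_greatest;
  first [apply loc_meet_lb2 | apply loc_meet_lb1].
Qed.

Lemma img_img {A B C : Type} (f : B -> C) (g : A -> B) (h : A -> C) (S : A -> Prop) :
  (forall x, f (g x) = h x) -> img f (img g S) = img h S.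
Proof.
  intros H. apply functional_extensionality; intro z.
  apply propositional_extensionality; split.
  - intros [y [[x [Hx ->]] ->]]. exists x; split; auto.
  - intros [x [Hx ->]]. exists (g x); split; auto. exists x; auto.
Qed.

Lemma supp_one (Q : BasedQuantale) s : is_equivariant_support Q s ->
  forall x, lact (s x) (sl_top (bq_Q Q)) = qmul (qmul x (qinv x)) (sl_top (bq_Q Q)).
Proof.
  intros [[Hj [Ht [Hle Hx]]] He] x.
  apply sl_le_antisym. apply Hle.
  rewrite <- (Hx x) at 1. rewrite qmul_lact, qmul_lact.
  apply (jp_mono (lact (s x)) (lact_join_r Q (s x))). apply le_top.
Qed.

Lemma supp_act (Q : BasedQuantale) s : is_equivariant_support Q s ->
  forall a, s (lact a (sl_top (bq_Q Q))) = a.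
Proof.
  intros [[Hj [Ht [Hle Hx]]] He] a. rewrite He, Ht. apply meet_top.
Qed.

Lemma part1 (Q R : BasedQuantale) (sQ : bq_Q Q -> bq_Q0 Q) (sR : bq_Q R -> bq_Q0 R)
          (f1 : bq_Q Q -> bq_Q R) (f0 : bq_Q0 Q -> bq_Q0 R) :
      is_equivariant_support Q sQ -> is_equivariant_support R sR ->
      strong_morphism Q R f1 f0 ->
      forall x, f0 (sQ x) = sR (f1 x).
Proof.
  intros HQ HR [Hj [Hm [Hi [Hf [Hl [Hr Ht]]]]]] x.
  rewrite <- (supp_act R sR HR (f0 (sQ x))).
  rewrite <- Ht, <- Hl, (supp_one Q sQ HQ), !Hm, Hi, Ht.
  rewrite <- (supp_one R sR HR). apply supp_act; auto.
Qed.

Definition Dn {T Mo : Type} {L : Mo -> SupLattice} (den : forall M : Mo, T -> L M)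
  (M : Mo) (P : T -> Prop) : L M := sl_sup (img (den M) P).

Definition satP {T Mo : Type} {L : Mo -> SupLattice} (den : forall M : Mo, T -> L M)
  (P : T -> Prop) : T -> Prop := fun t => forall M, sl_le (den M t) (Dn den M P).

Lemma Dn_sat {T Mo : Type} {L : Mo -> SupLattice} (den : forall M : Mo, T -> L M) P M :
  Dn den M (satP den P) = Dn den M P.
Proof.
  apply sl_le_antisym.
  - apply sl_sup_least. intros z [t [Ht ->]]. apply Ht.
  - apply sup_mono. intros z [t [Ht ->]]. exists t; split; auto.
    intros M'. apply sl_sup_ub. exists t; auto.
Qed.

Definition Car {T Mo : Type} {L : Mo -> SupLattice} (den : forall M : Mo, T -> L M) :=
  {P : T -> Prop | forall t, satP den P t -> P t}.

Definition mk {T Mo : Type} {L : Mo -> SupLattice} (den : forall M : Mo, T -> L M)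
  (P : T -> Prop) : Car den.
Proof.
  exists (satP den P). intros t Ht M. rewrite <- (Dn_sat den P M). apply Ht.
Defined.

Definition D {T Mo : Type} {L : Mo -> SupLattice} (den : forall M : Mo, T -> L M)
  (M : Mo) (X : Car den) : L M := Dn den M (proj1_sig X).

Lemma D_mk {T Mo : Type} {L : Mo -> SupLattice} (den : forall M : Mo, T -> L M) P M :
  D den M (mk den P) = Dn den M P.
Proof. apply Dn_sat. Qed.

Lemma Car_incl {T Mo : Type} {L : Mo -> SupLattice} (den : forall M : Mo, T -> L M)
  (X Y : Car den) : (forall M, sl_le (D den M X) (D den M Y)) ->
  forall t, proj1_sig X t -> proj1_sig Y t.
Proof.
  destruct X as [P HP], Y as [P' HP']; simpl. intros H t Ht.
  apply HP'. intros M. eapply sl_le_trans; [|apply H].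
  apply sl_sup_ub. exists t; auto.
Qed.

Lemma Car_eq {T Mo : Type} {L : Mo -> SupLattice} (den : forall M : Mo, T -> L M)
  (X Y : Car den) : (forall t, proj1_sig X t -> proj1_sig Y t) ->
  (forall t, proj1_sig Y t -> proj1_sig X t) -> X = Y.
Proof.
  destruct X as [P HP], Y as [P' HP']; simpl. intros H1 H2.
  assert (P = P').
  { apply functional_extensionality; intro t; apply propositional_extensionality; split; auto. }
  subst. f_equal. apply proof_irrelevance.
Qed.

Lemma Car_ext {T Mo : Type} {L : Mo -> SupLattice} (den : forall M : Mo, T -> L M)
  (X Y : Car den) : (forall M, D den M X = D den M Y) -> X = Y.
Proof.
  intros H. apply Car_eq; apply Car_incl; intros M; rewrite H; apply sl_le_refl.
Qed.

Definition CarSL {T Mo : Type} {L : Mo -> SupLattice} (den : forall M : Mo, T -> L M)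
  : SupLattice.
Proof.
  refine {| sl_car := Car den;
            sl_le := fun X Y => forall t, proj1_sig X t -> proj1_sig Y t;
            sl_sup := fun F => mk den (fun t => exists X, F X /\ proj1_sig X t) |}.
  - auto.
  - auto.
  - intros; apply Car_eq; auto.
  - intros F X HX t Ht. simpl. intros M. apply sl_sup_ub. exists t; split; auto.
    exists X; auto.
  - intros F Y H t Ht. destruct Y as [P HP]; simpl in *. apply HP. intros M.
    eapply sl_le_trans; [apply Ht|]. apply sl_sup_least. intros z [s [[X [HX Hs]] ->]].
    apply sl_sup_ub. exists s; split; auto. apply (H X HX s Hs).
Defined.

Lemma D_sup {T Mo : Type} {L : Mo -> SupLattice} (den : forall M : Mo, T -> L M) M
  (F : CarSL den -> Prop) :
  D den M (sl_sup F) = sl_sup (img (D den M) F).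
Proof.
  simpl. rewrite D_mk. apply sl_le_antisym.
  - apply sl_sup_least. intros z [t [[X [HX Ht]] ->]].
    eapply sl_le_trans; [|apply sl_sup_ub; exists X; split; eauto].
    apply sl_sup_ub. exists t; auto.
  - apply sl_sup_least. intros z [X [HX ->]]. apply sup_mono.
    intros z [t [Ht ->]]. exists t; split; auto. exists X; auto.
Qed.

Lemma Dn_single {T Mo : Type} {L : Mo -> SupLattice} (den : forall M : Mo, T -> L M) M t :
  Dn den M (fun s => s = t) = den M t.
Proof.
  apply sl_le_antisym.
  - apply sl_sup_least. intros z [s [-> ->]]. apply sl_le_refl.
  - apply sl_sup_ub. exists t; auto.
Qed.

Lemma D_le {T Mo : Type} {L : Mo -> SupLattice} (den : forall M : Mo, T -> L M)
  (X Y : CarSL den) : (forall M, sl_le (D den M X) (D den M Y)) -> sl_le X Y.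
Proof. intros H; exact (Car_incl den X Y H). Qed.

Lemma Dn_un {T1 T2 : Type} {L1 L2 : SupLattice} (d1 : T1 -> L1) (d2 : T2 -> L2)
  (Op : T1 -> T2) (op : L1 -> L2)
  (Hd : forall t, d2 (Op t) = op (d1 t))
  (Hj : forall S, op (sl_sup S) = sl_sup (img op S)) (P : T1 -> Prop) :
  sl_sup (img d2 (fun t => exists t1, P t1 /\ t = Op t1)) = op (sl_sup (img d1 P)).
Proof.
  rewrite Hj. apply sl_le_antisym.
  - apply sl_sup_least. intros z [t [[t1 [H1 ->]] ->]]. rewrite Hd.
    apply sl_sup_ub. exists (d1 t1); split; auto. exists t1; auto.
  - apply sl_sup_least. intros z [y [[t1 [H1 ->]] ->]]. rewrite <- Hd.
    apply sl_sup_ub. exists (Op t1); split; [exists t1; auto | reflexivity].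
Qed.

Lemma Dn_bin {T1 T2 T3 : Type} {L1 L2 L3 : SupLattice} (d1 : T1 -> L1) (d2 : T2 -> L2)
  (d3 : T3 -> L3) (Op : T1 -> T2 -> T3) (op : L1 -> L2 -> L3)
  (Hd : forall t1 t2, d3 (Op t1 t2) = op (d1 t1) (d2 t2))
  (Hl : forall S y, op (sl_sup S) y = sl_sup (img (fun x => op x y) S))
  (Hr : forall x S, op x (sl_sup S) = sl_sup (img (op x) S))
  (P1 : T1 -> Prop) (P2 : T2 -> Prop) :
  sl_sup (img d3 (fun t => exists t1 t2, P1 t1 /\ P2 t2 /\ t = Op t1 t2)) =
  op (sl_sup (img d1 P1)) (sl_sup (img d2 P2)).
Proof.
  rewrite Hl. apply sl_le_antisym.
  - apply sl_sup_least. intros z [t [[t1 [t2 [H1 [H2 ->]]]] ->]]. rewrite Hd.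
    eapply sl_le_trans.
    2:{ apply sl_sup_ub. exists (d1 t1); split; eauto. exists t1; auto. }
    apply (jp_mono (op (d1 t1)) (Hr (d1 t1))). apply sl_sup_ub. exists t2; auto.
  - apply sl_sup_least. intros z [x [[t1 [H1 ->]] ->]]. rewrite Hr.
    apply sl_sup_least. intros z [y [[t2 [H2 ->]] ->]]. rewrite <- Hd.
    apply sl_sup_ub. exists (Op t1 t2); split; [exists t1, t2; auto | reflexivity].
Qed.

Record Model (Q : BasedQuantale) := {
  mS : BasedQuantale;
  ms : bq_Q mS -> bq_Q0 mS;
  mf1 : bq_Q Q -> bq_Q mS;
  mf0 : bq_Q0 Q -> bq_Q0 mS;
  m_sup : is_equivariant_support mS ms;
  m_str : strong_morphism Q mS mf1 mf0 }.

Arguments mS {Q} _.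
Arguments ms {Q} _ _.
Arguments mf1 {Q} _ _.
Arguments mf0 {Q} _ _.
Arguments m_sup {Q} _.
Arguments m_str {Q} _.

Inductive QT (Q : BasedQuantale) : Type :=
| QGen : bq_Q Q -> QT Q
| QMul : QT Q -> QT Q -> QT Q
| QInv : QT Q -> QT Q
| QL : BT Q -> QT Q -> QT Q
| QR : QT Q -> BT Q -> QT Q
with BT (Q : BasedQuantale) : Type :=
| BGen : bq_Q0 Q -> BT Q
| BSupp : QT Q -> BT Q
| BMeet : BT Q -> BT Q -> BT Q.

Arguments QGen {Q} _. Arguments QMul {Q} _ _. Arguments QInv {Q} _.
Arguments QL {Q} _ _. Arguments QR {Q} _ _.
Arguments BGen {Q} _. Arguments BSupp {Q} _. Arguments BMeet {Q} _ _.

Fixpoint qden {Q} (M : Model Q) (t : QT Q) : bq_Q (mS M) :=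
  match t with
  | QGen x => mf1 M x
  | QMul a b => qmul (qden M a) (qden M b)
  | QInv a => qinv (qden M a)
  | QL b a => lact (bden M b) (qden M a)
  | QR a b => ract (qden M a) (bden M b)
  end
with bden {Q} (M : Model Q) (b : BT Q) : loc_sl (bq_Q0 (mS M)) :=
  match b with
  | BGen a => mf0 M a
  | BSupp t => ms M (qden M t)
  | BMeet b1 b2 => loc_meet (bden M b1) (bden M b2)
  end.

Definition RQ Q : SupLattice := CarSL (L := fun M : Model Q => bq_Q (mS M)) qden.
Definition RB Q : SupLattice := CarSL (L := fun M : Model Q => loc_sl (bq_Q0 (mS M))) bden.

Definition DQ {Q} (M : Model Q) (X : RQ Q) : bq_Q (mS M) := D qden M X.
Definition DB {Q} (M : Model Q) (X : RB Q) : loc_sl (bq_Q0 (mS M)) := D bden M X.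

Lemma img_ext {A B : Type} (f g : A -> B) (S : A -> Prop) :
  (forall x, f x = g x) -> img f S = img g S.
Proof.
  intros H. apply functional_extensionality; intro z.
  apply propositional_extensionality; split; intros [x [Hx ->]]; exists x; rewrite H; auto.
Qed.

Lemma meet_join_l (A : Locale) (S : A -> Prop) b :
  loc_meet (sl_sup S) b = sl_sup (img (fun a => loc_meet a b) S).
Proof.
  rewrite meet_comm, loc_distr. f_equal. apply img_ext. intros; apply meet_comm.
Qed.

Definition Rmul {Q} (X Y : RQ Q) : RQ Q :=
  mk qden (fun t => exists t1 t2, proj1_sig X t1 /\ proj1_sig Y t2 /\ t = QMul t1 t2).
Definition Rinv {Q} (X : RQ Q) : RQ Q :=
  mk qden (fun t => exists t1, proj1_sig X t1 /\ t = QInv t1).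
Definition Rlact {Q} (X : RB Q) (Y : RQ Q) : RQ Q :=
  mk qden (fun t => exists t1 t2, proj1_sig X t1 /\ proj1_sig Y t2 /\ t = QL t1 t2).
Definition Rract {Q} (Y : RQ Q) (X : RB Q) : RQ Q :=
  mk qden (fun t => exists t1 t2, proj1_sig Y t1 /\ proj1_sig X t2 /\ t = QR t1 t2).
Definition Rmeet {Q} (X Y : RB Q) : RB Q :=
  mk bden (fun t => exists t1 t2, proj1_sig X t1 /\ proj1_sig Y t2 /\ t = BMeet t1 t2).
Definition Rsupp {Q} (X : RQ Q) : RB Q :=
  mk bden (fun t => exists t1, proj1_sig X t1 /\ t = BSupp t1).
Definition e1 {Q} (x : bq_Q Q) : RQ Q := mk qden (fun t => t = QGen x).
Definition e0 {Q} (a : bq_Q0 Q) : RB Q := mk bden (fun t => t = BGen a).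
Definition atQ {Q} (t : QT Q) : RQ Q := mk qden (fun s => s = t).
Definition atB {Q} (t : BT Q) : RB Q := mk bden (fun s => s = t).

Lemma DQ_mul {Q} (M : Model Q) X Y : DQ M (Rmul X Y) = qmul (DQ M X) (DQ M Y).
Proof. unfold DQ, Rmul; rewrite D_mk. apply Dn_bin; [reflexivity|apply qmul_join_l|apply qmul_join_r]. Qed.
Lemma DQ_inv {Q} (M : Model Q) X : DQ M (Rinv X) = qinv (DQ M X).
Proof. unfold DQ, Rinv; rewrite D_mk. apply Dn_un; [reflexivity|apply qinv_join]. Qed.
Lemma DQ_lact {Q} (M : Model Q) X Y : DQ M (Rlact X Y) = lact (DB M X) (DQ M Y).
Proof. unfold DQ, DB, Rlact; rewrite D_mk. apply Dn_bin; [reflexivity|apply lact_join_l|apply lact_join_r]. Qed.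
Lemma DQ_ract {Q} (M : Model Q) X Y : DQ M (Rract Y X) = ract (DQ M Y) (DB M X).
Proof. unfold DQ, DB, Rract; rewrite D_mk. apply Dn_bin; [reflexivity|apply ract_join_l|apply ract_join_r]. Qed.
Lemma DB_meet {Q} (M : Model Q) X Y : DB M (Rmeet X Y) = loc_meet (DB M X) (DB M Y).
Proof. unfold DB, Rmeet; rewrite D_mk. apply Dn_bin; [reflexivity|apply meet_join_l|apply loc_distr]. Qed.
Lemma DB_supp {Q} (M : Model Q) X : DB M (Rsupp X) = ms M (DQ M X).
Proof. unfold DQ, DB, Rsupp; rewrite D_mk. apply Dn_un; [reflexivity|].
  destruct (m_sup M) as [[Hj _] _]. apply Hj. Qed.
Lemma DQ_at {Q} (M : Model Q) t : DQ M (atQ t) = qden M t.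
Proof. unfold DQ, atQ; rewrite D_mk. exact (Dn_single _ M t). Qed.
Lemma DB_at {Q} (M : Model Q) t : DB M (atB t) = bden M t.
Proof. unfold DB, atB; rewrite D_mk. exact (Dn_single _ M t). Qed.
Lemma DQ_e1 {Q} (M : Model Q) x : DQ M (e1 x) = mf1 M x.
Proof. apply (DQ_at M (QGen x)). Qed.
Lemma DB_e0 {Q} (M : Model Q) a : DB M (e0 a) = mf0 M a.
Proof. apply (DB_at M (BGen a)). Qed.
Lemma DQ_sup {Q} (M : Model Q) (F : RQ Q -> Prop) : DQ M (sl_sup F) = sl_sup (img (DQ M) F).
Proof. exact (D_sup _ M F). Qed.
Lemma DB_sup {Q} (M : Model Q) (F : RB Q -> Prop) : DB M (sl_sup F) = sl_sup (img (DB M) F).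
Proof. exact (D_sup _ M F). Qed.
Lemma DQ_ext {Q} (X Y : RQ Q) : (forall M, DQ M X = DQ M Y) -> X = Y.
Proof. exact (Car_ext _ X Y). Qed.
Lemma DB_ext {Q} (X Y : RB Q) : (forall M, DB M X = DB M Y) -> X = Y.
Proof. exact (Car_ext _ X Y). Qed.
Lemma DQ_le {Q} (X Y : RQ Q) : (forall M, sl_le (DQ M X) (DQ M Y)) -> sl_le X Y.
Proof. exact (D_le _ X Y). Qed.
Lemma DB_le {Q} (X Y : RB Q) : (forall M, sl_le (DB M X) (DB M Y)) -> sl_le X Y.
Proof. exact (D_le _ X Y). Qed.
Lemma DB_le_inv {Q} (X Y : RB Q) M : sl_le X Y -> sl_le (DB M X) (DB M Y).
Proof. intros H. apply sup_mono. intros z [t [Ht ->]]. exists t; split; auto. Qed.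
Lemma DQ_top {Q} (M : Model Q) : DQ M (sl_top (RQ Q)) = sl_top (bq_Q (mS M)).
Proof.
  apply sl_le_antisym. apply le_top. unfold sl_top at 2. rewrite DQ_sup.
  destruct (m_str M) as [_ [_ [_ [_ [_ [_ Ht]]]]]]. rewrite <- Ht, <- DQ_e1.
  apply sl_sup_ub. exists (e1 (sl_top (bq_Q Q))); split; auto.
Qed.
Lemma DB_top {Q} (M : Model Q) : DB M (sl_top (RB Q)) = sl_top (loc_sl (bq_Q0 (mS M))).
Proof.
  apply sl_le_antisym. apply le_top. unfold sl_top at 2. rewrite DB_sup.
  destruct (m_str M) as [_ [_ [_ [[_ [_ Ht]] _]]]]. rewrite <- Ht, <- DB_e0.
  apply sl_sup_ub. exists (e0 (sl_top (bq_Q0 Q))); split; auto.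
Qed.

Definition RLoc (Q : BasedQuantale) : Locale.
Proof.
  refine {| loc_sl := RB Q; loc_meet := Rmeet |}.
  - intros; apply DB_le; intro M; rewrite DB_meet; apply loc_meet_lb1.
  - intros; apply DB_le; intro M; rewrite DB_meet; apply loc_meet_lb2.
  - intros a b c Ha Hb; apply DB_le; intro M; rewrite DB_meet;
      apply loc_meet_greatest; apply DB_le_inv; auto.
  - intros a S; apply DB_ext; intro M. rewrite DB_meet, !DB_sup, loc_distr.
    rewrite (img_img (DB M) (Rmeet a) (fun x => loc_meet (DB M a) (DB M x))) by (intros; apply DB_meet).
    rewrite (img_img (loc_meet (DB M a)) (DB M) (fun x => loc_meet (DB M a) (DB M x))) by reflexivity.
    reflexivity.
Defined.

Lemma DB_sup' {Q} (M : Model Q) (F : RLoc Q -> Prop) :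
  DB M (sl_sup (s := loc_sl (RLoc Q)) F) = sl_sup (img (DB M) F).
Proof. exact (DB_sup M F). Qed.
Lemma DB_top' {Q} (M : Model Q) : DB M (sl_top (loc_sl (RLoc Q))) = sl_top (loc_sl (bq_Q0 (mS M))).
Proof. exact (DB_top M). Qed.

Lemma DB_meet' {Q} (M : Model Q) (X Y : RLoc Q) :
  DB M (loc_meet X Y) = loc_meet (DB M X) (DB M Y).
Proof. exact (DB_meet M X Y). Qed.

Ltac qext := first [apply DQ_ext | apply DB_ext]; intro M;
  repeat first [rewrite DQ_mul | rewrite DQ_inv | rewrite DQ_lact | rewrite DQ_ract
               | rewrite DB_meet | rewrite DB_supp | rewrite DQ_sup | rewrite DB_sup | rewrite DB_sup' | rewrite DB_top' | rewrite DB_meet' ].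

Definition RBQ (Q : BasedQuantale) : BasedQuantale.
Proof.
  refine {| bq_Q0 := RLoc Q; bq_Q := RQ Q; lact := Rlact; ract := Rract;
            qmul := Rmul; qinv := Rinv |}.
  - intros S m; qext. rewrite lact_join_l.
    rewrite (img_img (DQ M) (fun a => Rlact a m) (fun a => lact (DB M a) (DQ M m))) by (intros; apply DQ_lact).
    rewrite (img_img (fun a => lact a (DQ M m)) (DB M) (fun a => lact (DB M a) (DQ M m))) by reflexivity.
    reflexivity.
  - intros a S; qext. rewrite lact_join_r.
    rewrite (img_img (DQ M) (Rlact a) (fun m => lact (DB M a) (DQ M m))) by (intros; apply DQ_lact).
    rewrite (img_img (lact (DB M a)) (DQ M) (fun m => lact (DB M a) (DQ M m))) by reflexivity.
    reflexivity.
  - intros S a; qext. rewrite ract_join_l.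
    rewrite (img_img (DQ M) (fun m => Rract m a) (fun m => ract (DQ M m) (DB M a))) by (intros; apply DQ_ract).
    rewrite (img_img (fun m => ract m (DB M a)) (DQ M) (fun m => ract (DQ M m) (DB M a))) by reflexivity.
    reflexivity.
  - intros m S; qext. rewrite ract_join_r.
    rewrite (img_img (DQ M) (Rract m) (fun a => ract (DQ M m) (DB M a))) by (intros; apply DQ_ract).
    rewrite (img_img (ract (DQ M m)) (DB M) (fun a => ract (DQ M m) (DB M a))) by reflexivity.
    reflexivity.
  - intros m; qext. apply lact_top.
  - intros a b m; qext. apply lact_meet.
  - intros m; qext. apply ract_top.
  - intros m a b; qext. apply ract_meet.
  - intros a m b; qext. apply lact_ract.
  - intros x y z; qext. apply qmul_assoc.
  - intros S y; qext. rewrite qmul_join_l.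
    rewrite (img_img (DQ M) (fun x => Rmul x y) (fun x => qmul (DQ M x) (DQ M y))) by (intros; apply DQ_mul).
    rewrite (img_img (fun x => qmul x (DQ M y)) (DQ M) (fun x => qmul (DQ M x) (DQ M y))) by reflexivity.
    reflexivity.
  - intros x S; qext. rewrite qmul_join_r.
    rewrite (img_img (DQ M) (Rmul x) (fun y => qmul (DQ M x) (DQ M y))) by (intros; apply DQ_mul).
    rewrite (img_img (qmul (DQ M x)) (DQ M) (fun y => qmul (DQ M x) (DQ M y))) by reflexivity.
    reflexivity.
  - intros a x y; qext. apply qmul_lact.
  - intros x a y; qext. apply qmul_ract_lact.
  - intros x y a; qext. apply qmul_ract.
  - intros S; qext. rewrite qinv_join.
    rewrite (img_img (DQ M) Rinv (fun x => qinv (DQ M x))) by (intros; apply DQ_inv).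
    rewrite (img_img qinv (DQ M) (fun x => qinv (DQ M x))) by reflexivity.
    reflexivity.
  - intros x; qext. apply qinv_invol.
  - intros x y; qext. apply qinv_mul.
  - intros a x b; qext. apply qinv_act.
Defined.


Lemma mf1_join {Q} (M : Model Q) S : mf1 M (sl_sup S) = sl_sup (img (mf1 M) S).
Proof. destruct (m_str M) as [H _]. apply H. Qed.
Lemma mf1_mul {Q} (M : Model Q) x y : mf1 M (qmul x y) = qmul (mf1 M x) (mf1 M y).
Proof. destruct (m_str M) as [_ [H _]]. apply H. Qed.
Lemma mf1_inv {Q} (M : Model Q) x : mf1 M (qinv x) = qinv (mf1 M x).
Proof. destruct (m_str M) as [_ [_ [H _]]]. apply H. Qed.
Lemma mf0_join {Q} (M : Model Q) S : mf0 M (sl_sup S) = sl_sup (img (mf0 M) S).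
Proof. destruct (m_str M) as [_ [_ [_ [[H _] _]]]]. apply H. Qed.
Lemma mf0_meet {Q} (M : Model Q) a b : mf0 M (loc_meet a b) = loc_meet (mf0 M a) (mf0 M b).
Proof. destruct (m_str M) as [_ [_ [_ [[_ [H _]] _]]]]. apply H. Qed.
Lemma mf0_top {Q} (M : Model Q) : mf0 M (sl_top (bq_Q0 Q)) = sl_top (bq_Q0 (mS M)).
Proof. destruct (m_str M) as [_ [_ [_ [[_ [_ H]] _]]]]. apply H. Qed.
Lemma mf1_lact {Q} (M : Model Q) a x : mf1 M (lact a x) = lact (mf0 M a) (mf1 M x).
Proof. destruct (m_str M) as [_ [_ [_ [_ [H _]]]]]. apply H. Qed.
Lemma mf1_ract {Q} (M : Model Q) x a : mf1 M (ract x a) = ract (mf1 M x) (mf0 M a).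
Proof. destruct (m_str M) as [_ [_ [_ [_ [_ [H _]]]]]]. apply H. Qed.
Lemma mf1_top {Q} (M : Model Q) : mf1 M (sl_top (bq_Q Q)) = sl_top (bq_Q (mS M)).
Proof. destruct (m_str M) as [_ [_ [_ [_ [_ [_ H]]]]]]. apply H. Qed.

Ltac qext2 := first [apply DQ_ext | apply DB_ext]; intro M; cbn [lact ract qmul qinv bq_Q bq_Q0 RBQ];
  repeat first [rewrite DQ_mul | rewrite DQ_inv | rewrite DQ_lact | rewrite DQ_ract
               | rewrite DB_meet | rewrite DB_supp | rewrite DQ_sup | rewrite DB_sup
               | rewrite DB_sup' | rewrite DB_top' | rewrite DB_meet' | rewrite DQ_top
               | rewrite DQ_e1 | rewrite DB_e0 | rewrite DQ_at | rewrite DB_at].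

Lemma R_supp Q : is_equivariant_support (RBQ Q) Rsupp.
Proof.
  split; [split; [|split; [|split]]|]; cbn [lact ract qmul qinv bq_Q bq_Q0 RBQ].
  - intros S; qext2. destruct (m_sup M) as [[Hj _] _]. rewrite Hj.
    rewrite (img_img (DB M) Rsupp (fun x => ms M (DQ M x))) by (intros; apply DB_supp).
    rewrite (img_img (ms M) (DQ M) (fun x => ms M (DQ M x))) by reflexivity. reflexivity.
  - qext2. destruct (m_sup M) as [[_ [Ht _]] _]. exact Ht.
  - intros x y. apply DQ_le. intros M. rewrite DQ_lact, DB_supp, !DQ_mul, DQ_inv.
    destruct (m_sup M) as [[_ [_ [H _]]] _]. apply H.
  - intros x; qext2. destruct (m_sup M) as [[_ [_ [_ H]]] _]. apply H.
  - intros a x; qext2. destruct (m_sup M) as [_ H]. apply H.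
Qed.

Lemma e_strong Q : strong_morphism Q (RBQ Q) e1 e0.
Proof.
  split; [|split; [|split; [|split; [|split; [|split]]]]];
    cbn [lact ract qmul qinv bq_Q bq_Q0 RBQ].
  - intros S; qext2. rewrite mf1_join.
    rewrite (img_img (DQ M) e1 (mf1 M)) by (intros; apply DQ_e1). reflexivity.
  - intros x y; qext2. apply mf1_mul.
  - intros x; qext2. apply mf1_inv.
  - split; [|split].
    + intros S; qext2. rewrite mf0_join.
      rewrite (img_img (DB M) e0 (mf0 M)) by (intros; apply DB_e0). reflexivity.
    + intros a b; qext2. apply mf0_meet.
    + qext2. apply mf0_top.
  - intros a x; qext2. apply mf1_lact.
  - intros x a; qext2. apply mf1_ract.
  - qext2. apply mf1_top.
Qed.

Scheme QT_ind2 := Induction for QT Sort Prop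
  with BT_ind2 := Induction for BT Sort Prop.
Combined Scheme QBT_ind from QT_ind2, BT_ind2.

Lemma atQ_mul {Q} (a b : QT Q) : atQ (QMul a b) = Rmul (atQ a) (atQ b).
Proof. qext2. reflexivity. Qed.
Lemma atQ_inv {Q} (a : QT Q) : atQ (QInv a) = Rinv (atQ a).
Proof. qext2. reflexivity. Qed.
Lemma atQ_L {Q} (b : BT Q) (a : QT Q) : atQ (QL b a) = Rlact (atB b) (atQ a).
Proof. qext2. reflexivity. Qed.
Lemma atQ_R {Q} (b : BT Q) (a : QT Q) : atQ (QR a b) = Rract (atQ a) (atB b).
Proof. qext2. reflexivity. Qed.
Lemma atB_meet {Q} (a b : BT Q) : atB (BMeet a b) = Rmeet (atB a) (atB b).
Proof. qext2. reflexivity. Qed.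
Lemma atB_supp {Q} (a : QT Q) : atB (BSupp a) = Rsupp (atQ a).
Proof. qext2. reflexivity. Qed.

Lemma RQ_atoms {Q} (X : RQ Q) : X = sl_sup (img atQ (proj1_sig X)).
Proof.
  qext2. rewrite (img_img (DQ M) atQ (qden M)) by (intros; apply DQ_at). reflexivity.
Qed.
Lemma RB_atoms {Q} (X : RB Q) : X = sl_sup (img atB (proj1_sig X)).
Proof.
  qext2. rewrite (img_img (DB M) atB (bden M)) by (intros; apply DB_at). reflexivity.
Qed.

Lemma uniq {Q} (M : Model Q) (h1 : bq_Q (RBQ Q) -> bq_Q (mS M)) (h0 : bq_Q0 (RBQ Q) -> bq_Q0 (mS M)) :
  strong_morphism (RBQ Q) (mS M) h1 h0 ->
  (forall x, h1 (e1 x) = mf1 M x) -> (forall a, h0 (e0 a) = mf0 M a) ->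
  (forall y, h1 y = DQ M y) /\ (forall b, h0 b = DB M b).
Proof.
  intros Hh H1 H0.
  pose proof Hh as [Hj [Hm [Hi [[Hj0 [Hm0 Ht0]] [Hl [Hr Ht]]]]]].
  assert (A : (forall t, h1 (atQ t) = qden M t) /\ (forall b, h0 (atB b) = bden M b)).
  { apply QBT_ind; intros.
    - apply H1.
    - rewrite atQ_mul. etransitivity; [exact (Hm (atQ q) (atQ q0))|]. simpl. congruence.
    - rewrite atQ_inv. etransitivity; [exact (Hi (atQ q))|]. simpl. congruence.
    - rewrite atQ_L. etransitivity; [exact (Hl (atB b) (atQ q))|]. simpl. congruence.
    - rewrite atQ_R. etransitivity; [exact (Hr (atQ q) (atB b))|]. simpl. congruence.
    - apply H0.
    - rewrite atB_supp. simpl. rewrite <- H.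
      exact (part1 (RBQ Q) (mS M) Rsupp (ms M) h1 h0 (R_supp Q) (m_sup M) Hh (atQ q)).
    - rewrite atB_meet. etransitivity; [exact (Hm0 (atB b) (atB b0))|]. simpl. congruence. }
  destruct A as [AQ AB]. split.
  - intros y. rewrite (RQ_atoms y) at 1. rewrite Hj.
    rewrite (img_img h1 atQ (qden M)) by auto. reflexivity.
  - intros b. rewrite (RB_atoms b) at 1. rewrite Hj0.
    rewrite (img_img h0 atB (bden M)) by auto. reflexivity.
Qed.

Theorem corollary3p27 :
  (forall (Q R : BasedQuantale) (sQ : bq_Q Q -> bq_Q0 Q) (sR : bq_Q R -> bq_Q0 R)
          (f1 : bq_Q Q -> bq_Q R) (f0 : bq_Q0 Q -> bq_Q0 R),
      is_equivariant_support Q sQ -> is_equivariant_support R sR ->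
      strong_morphism Q R f1 f0 ->
      forall x, f0 (sQ x) = sR (f1 x))
  /\
  (forall Q : BasedQuantale,
     exists (R : BasedQuantale) (e1 : bq_Q Q -> bq_Q R) (e0 : bq_Q0 Q -> bq_Q0 R),
       has_eq_support R /\ strong_morphism Q R e1 e0 /\
       forall (S : BasedQuantale) (f1 : bq_Q Q -> bq_Q S) (f0 : bq_Q0 Q -> bq_Q0 S),
         has_eq_support S -> strong_morphism Q S f1 f0 ->
         exists (g1 : bq_Q R -> bq_Q S) (g0 : bq_Q0 R -> bq_Q0 S),
           strong_morphism R S g1 g0 /\
           (forall x, g1 (e1 x) = f1 x) /\ (forall a, g0 (e0 a) = f0 a) /\
           forall (h1 : bq_Q R -> bq_Q S) (h0 : bq_Q0 R -> bq_Q0 S),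
             strong_morphism R S h1 h0 ->
             (forall x, h1 (e1 x) = f1 x) -> (forall a, h0 (e0 a) = f0 a) ->
             (forall y, h1 y = g1 y) /\ (forall b, h0 b = g0 b)).
Proof.
  split.
  - exact part1.
  - intros Q. exists (RBQ Q), e1, e0.
    split; [exists Rsupp; apply R_supp|]. split; [apply e_strong|].
    intros S f1 f0 [sS HsS] Hf.
    set (M := {| mS := S; ms := sS; mf1 := f1; mf0 := f0; m_sup := HsS; m_str := Hf |}).
    exists (DQ M), (DB M). split; [|split; [|split]].
    + split; [|split; [|split; [|split; [|split; [|split]]]]];
        cbn [lact ract qmul qinv bq_Q bq_Q0 RBQ].
      * intros F; exact (DQ_sup M F).
      * intros x y; exact (DQ_mul M x y).
      * intros x; exact (DQ_inv M x).
      * split; [|split].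
        -- intros F; exact (DB_sup' M F).
        -- intros a b; exact (DB_meet' M a b).
        -- exact (DB_top' M).
      * intros a x; exact (DQ_lact M a x).
      * intros x a; exact (DQ_ract M a x).
      * exact (DQ_top M).
    + intros x; exact (DQ_e1 M x).
    + intros a; exact (DB_e0 M a).
    + intros h1 h0 Hh H1 H0. exact (uniq M h1 h0 Hh H1 H0).
Qed.
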